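(* A (finite) maximal triangle-free graph on at least two vertices contains no induced cycle of length six if and only if it is a blow-up of some Andrásfai graph $\Gamma_k$, $k\ge1$.
   Context: A graph is maximal triangle-free if it contains no triangle but adding any new edge creates a triangle. A blow-up of $H$ is any graph obtained by replacing each vertex of $H$ by a non-empty independent set and each edge of $H$ by the complete bipartite graph between the corresponding sets, with no further edges. Andrásfai graph $\Gamma_k$: vertex set $\mathbb Z/(3k-1)\mathbb Z$, $ij$ an edge iff $i-j\in\{k,\dots,2k-1\}$ mod $3k-1$. *)

(* Defs.v *)
From mathcomp Require Import all_boot.
Set Implicit Arguments. Unset Strict Implicit. Unset Printing Implicit Defensive.

Section Graphs.
Variable T : finType.
Variable e : rel T.

Definition simple_graph : Prop := symmetric e /\ irreflexive e.

Definition triangle_free : Prop :=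
  forall x y z : T, ~~ [&& e x y, e y z & e x z].

(* triangle-free, and adding any new edge (between distinct non-adjacent
   vertices) creates a triangle, i.e. they have a common neighbour *)
Definition maximal_triangle_free : Prop :=
  triangle_free /\
  forall x y : T, x != y -> ~~ e x y -> exists z : T, e x z && e z y.

Definition c6_adj (i j : 'I_6) : bool :=
  (j == (i.+1 %% 6) :> nat) || (i == (j.+1 %% 6) :> nat).

Definition has_induced_C6 : Prop :=
  exists v : 'I_6 -> T, injective v /\
    forall i j : 'I_6, e (v i) (v j) = c6_adj i j.

(* blow-up of a graph H (vertex type U, adjacency eH): each vertex of H is
   replaced by the nonempty independent set f^-1(u) (surjectivity), and
   adjacency is exactly induced by eH *)
Definition is_blowup_of (U : finType) (eH : rel U) : Prop :=
  exists f : T -> U, (forall u : U, exists x : T, f x = u) /\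
    forall x y : T, e x y = eH (f x) (f y).
End Graphs.

Definition andrasfai_adj (k : nat) (i j : 'I_(3 * k - 1)) : bool :=
  let n := 3 * k - 1 in
  let d := (i + n - j) %% n in
  (k <= d) && (d <= 2 * k - 1).

(* Main.v *)
Require Import Defs.
From mathcomp Require Import zify.
From mathcomp Require Import all_boot.
Set Implicit Arguments. Unset Strict Implicit. Unset Printing Implicit Defensive.

Lemma c6_twinfree : forall i j : 'I_6, i != j -> exists l : 'I_6, c6_adj i l != c6_adj j l.
Proof.
move=> [[|[|[|[|[|[|i]]]]]] Hi] [[|[|[|[|[|[|j]]]]]] Hj] // _;
first [ by exists (@Ordinal 6 0 isT) | by exists (@Ordinal 6 1 isT) | by exists (@Ordinal 6 2 isT)
      | by exists (@Ordinal 6 3 isT) | by exists (@Ordinal 6 4 isT) | by exists (@Ordinal 6 5 isT) ].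
Qed.

Definition adjN (k a b : nat) := ((b + k <= a) && (a <= b + 2*k-1)) || ((a + k <= b) && (b <= a + 2*k-1)).
Lemma andrE k (i j : 'I_(3*k-1)) : 1 <= k -> andrasfai_adj i j = adjN k i j.
Proof.
move=> k1; rewrite /andrasfai_adj /adjN.
have li := ltn_ord i; have lj := ltn_ord j.
have -> : (i + (3*k-1) - j) %% (3*k-1) = if j <= i then i - j else i + (3*k-1) - j.
  case: leqP => ji.
    have -> : i + (3*k-1) - j = (i - j) + (3*k-1) by lia.
    by rewrite modnDr modn_small //; lia.
  by rewrite modn_small //; lia.
case: (leqP j i) => ji; lia.
Qed.
Lemma fill_gap (A : finType) (C : {set A}) (h : A -> nat) :
  {in C &, injective h} -> (forall X, X \in C -> h X < #|C|) ->
  forall i, i < #|C| -> exists2 X, X \in C & h X = i.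
Proof.
move=> hi hlt i ilt.
suff /exists_inP[X XC /eqP hX] : [exists X in C, h X == i] by exists X.
apply: contraT => /exists_inPn H.
have U : uniq (map h (enum C)).
  by rewrite map_inj_in_uniq ?enum_uniq // => X Y; rewrite !mem_enum; apply: hi.
have sub : {subset map h (enum C) <= rem i (iota 0 #|C|)}.
  move=> m /mapP[X]; rewrite mem_enum => XC ->.
  rewrite (mem_rem_uniq _ (iota_uniq 0 #|C|)) inE mem_iota /= add0n hlt // andbT.
  by apply/negP=> /eqP hX; move: (H X XC); rewrite hX eqxx.
have := uniq_leq_size U sub.
rewrite size_map -cardE size_rem ?mem_iota ?add0n ?size_iota //; lia.
Qed.

Lemma dPn (A : finType) (X Y : {set A}) : ~~ [disjoint X & Y] -> exists2 t, t \in X & t \in Y.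
Proof. by case/pred0Pn=> t /andP[??]; exists t. Qed.
Lemma dP (A : finType) (X Y : {set A}) t : [disjoint X & Y] -> t \in X -> t \in Y -> False.
Proof. move=> d tX tY; by move/pred0P: d => /(_ t) /=; rewrite tX tY. Qed.
Lemma dI (A : finType) (X Y : {set A}) : (forall t, t \in X -> t \in Y -> False) -> [disjoint X & Y].
Proof. by move=> h; apply/pred0P=> t /=; apply/negP=> /andP[??]; apply: (h t). Qed.

Section Fwd.
Variables (T : finType) (e : rel T).
Hypothesis esym : symmetric e.
Hypothesis eirr : irreflexive e.
Hypothesis tf : triangle_free e.
Hypothesis mx : forall x y : T, x != y -> ~~ e x y -> exists z : T, e x z && e z y.
Hypothesis nc6 : ~ has_induced_C6 e.

Lemma notri x y z : e x y -> e y z -> e x z -> False.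
Proof. by move=> a b c; move: (tf x y z); rewrite a b c. Qed.

Lemma mkC6 a b c x y z : ~~ e a b -> ~~ e b c -> ~~ e a c ->
  e a x -> e x b -> ~~ e x c -> e b y -> e y c -> ~~ e y a ->
  e c z -> e z a -> ~~ e z b -> False.
Proof.
move=> ab bc ac ax xb xc byy yc ya cz za zb; apply: nc6.
pose v (i : 'I_6) := nth a [:: a; x; b; y; c; z] i.
have sy u w : e u w = e w u by apply: esym.
have xy : ~~ e x y by apply/negP=> h; apply: (@notri x b y) => //; rewrite sy.
have yz : ~~ e y z by apply/negP=> h; apply: (@notri y c z) => //; rewrite sy.
have xz : ~~ e x z by apply/negP=> h; apply: (@notri x a z) => //; rewrite sy.
have F : forall p q, e p q = true -> e q p = true by move=> p q; rewrite sy.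
have G : forall p q, ~~ e p q -> e q p = false by move=> p q; rewrite sy => /negbTE.
have ad : forall i j, e (v i) (v j) = c6_adj i j.
  move=> [[|[|[|[|[|[|i]]]]]] Hi] [[|[|[|[|[|[|j]]]]]] Hj] //;
  rewrite /v /c6_adj /= ?eirr //;
  by rewrite ?ax ?xb ?byy ?yc ?cz ?za ?(F _ _ ax) ?(F _ _ xb) ?(F _ _ byy) ?(F _ _ yc) ?(F _ _ cz) ?(F _ _ za)
     ?(negbTE ab) ?(negbTE bc) ?(negbTE ac) ?(negbTE xc) ?(negbTE ya) ?(negbTE zb)
     ?(negbTE xy) ?(negbTE yz) ?(negbTE xz)
     ?(G _ _ ab) ?(G _ _ bc) ?(G _ _ ac) ?(G _ _ xc) ?(G _ _ ya) ?(G _ _ zb) ?(G _ _ xy) ?(G _ _ yz) ?(G _ _ xz).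
exists v; split=> // i j vij.
apply/eqP; apply/negPn/negP => nij.
have [l] := c6_twinfree nij.
by rewrite -!ad vij eqxx.
Qed.

Variable v : T.
Definition S := [set s | e v s].
Definition M := [set x | (x != v) && ~~ e v x].
Definition tr x := [set s | e v s && e x s].

Lemma sy u w : e u w = e w u. Proof. by apply: esym. Qed.

Lemma trS x : tr x \subset S.
Proof. by apply/subsetP=> s; rewrite !inE => /andP[]. Qed.

Lemma S_indep s t : s \in S -> t \in S -> ~~ e s t.
Proof. rewrite !inE => hs ht; apply/negP=> h; exact: (@notri v s t). Qed.

Lemma tr_ne x : x \in M -> exists s, s \in tr x.
Proof.
rewrite inE => /andP[xv vx].
have vx' : v != x by rewrite eq_sym.
have [z /andP[vz zx]] := mx vx' vx.
by exists z; rewrite inE vz sy.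
Qed.

Lemma disjE x y : x \in M -> y \in M -> e x y = [disjoint tr x & tr y].
Proof.
move=> xM yM; apply/idP/idP.
  move=> xy; apply/pred0P=> s /=; apply/negP; rewrite !inE => /andP[/andP[vs xs] /andP[_ ys]].
  by apply: (@notri x y s) => //.
move=> D; apply/negPn/negP => nxy.
have [s sx] := tr_ne xM; have [t ty] := tr_ne yM.
have xy : x != y.
  by apply/negP=> /eqP exy; subst y; move/pred0P: D => /(_ s) /=; rewrite sx.
have [z /andP[xz zy]] := mx xy nxy.
have sny : s \notin tr y by apply/negP => sy'; move/pred0P: D => /(_ s) /=; rewrite sx sy'.
have tnx : t \notin tr x by apply/negP => tx; move/pred0P: D => /(_ t) /=; rewrite tx ty.
move: (xM) (yM) sx ty sny tnx; rewrite !inE => /andP[xv vx] /andP[yv vy] /andP[vs xs] /andP[vt yt].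
rewrite vs vt /= => ys xt.
have zv : ~~ e z v.
  apply/negP=> zv.
  have zin : z \in tr x by rewrite inE (sy v z) zv xz.
  have zin' : z \in tr y by rewrite inE (sy v z) zv (sy y z) zy.
  by move/pred0P: D => /(_ z) /=; rewrite zin zin'.
apply: (@mkC6 v x y s z t) => //; by rewrite sy.
Qed.

Lemma Lmax x s : x \in M -> s \in S -> s \notin tr x ->
  exists2 y, y \in M & (s \in tr y) && [disjoint tr y & tr x].
Proof.
move=> xM sS snx.
move: (xM) (sS) snx; rewrite !inE => /andP[xv vx] vs; rewrite vs /= => sx.
have sx' : s != x by apply/negP=> /eqP esx; subst s; rewrite vs in vx.
have sx2 : ~~ e s x by rewrite sy.
have [z /andP[sz zx]] := mx sx' sx2.
have zv : z != v by apply/negP=> /eqP ezv; subst z; rewrite zx in vx.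
have vz : ~~ e v z by apply/negP=> vz; apply: (@notri v s z).
have zM : z \in M by rewrite inE zv vz.
exists z => //; rewrite -disjE // zx andbT inE vs /=; by rewrite sy.
Qed.

Lemma Ltri x y z : x \in M -> y \in M -> z \in M ->
  [disjoint tr x & tr y] -> [disjoint tr y & tr z] -> [disjoint tr x & tr z] -> False.
Proof.
move=> xM yM zM; rewrite -!disjE // => ??? ; exact: (@notri x y z).
Qed.

Lemma Lcross x y : x \in M -> y \in M -> ~~ [disjoint tr x & tr y] ->
  ~~ (tr x \subset tr y) -> ~~ (tr y \subset tr x) ->
  forall s, s \in S -> (s \in tr x) || (s \in tr y).
Proof.
move=> xM yM Dxy nxy nyx s sS; apply/negPn/negP; rewrite negb_or => /andP[snx sny].
have [a] : exists a, (a \in tr x) && (a \notin tr y).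
  by move/subsetPn: nxy => [a ax ay]; exists a; rewrite ax ay.
move=> /andP[ax ay].
have [b] : exists b, (b \in tr y) && (b \notin tr x).
  by move/subsetPn: nyx => [b ax' ay']; exists b; rewrite ax' ay'.
move=> /andP[bt bx].
have [t] : exists t, (t \in tr x) && (t \in tr y).
  by move/pred0Pn: Dxy => [t /andP[t1 t2]]; exists t; apply/andP; split.
move=> /andP[tx ty].
have nexy : ~~ e x y by rewrite disjE.
have now : forall w, w \in M -> [disjoint tr w & tr x] -> [disjoint tr w & tr y] -> False.
  move=> w wM dwx dwy.
  move: (xM) (yM) (wM) ax ay bt bx; rewrite !inE => /andP[xv vx] /andP[yv vy] /andP[wv vw].
  move=> /andP[va xa] /nandP ay' /andP[vb yb] /nandP bx'.
  have ay'' : ~~ e y a by case: ay' => //; rewrite va.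
  have bx'' : ~~ e x b by case: bx' => //; rewrite vb.
  have ewx : e x w by rewrite disjE // disjoint_sym.
  have ewy : e w y by rewrite disjE.
  apply: (@mkC6 v x y a w b) => //; by rewrite sy.
have [w1 w1M /andP[sw1 dw1]] := Lmax xM sS snx.
have [w2 w2M /andP[sw2 dw2]] := Lmax yM sS sny.
have m1 : ~~ [disjoint tr w1 & tr y] by apply/negP=> d; exact: (now w1).
have m2 : ~~ [disjoint tr w2 & tr x] by apply/negP=> d; exact: (now w2).
have sx : ~~ e s x by move: snx; rewrite inE -(sy x s) (_ : e v s = true) //; rewrite inE in sS.
have sy' : ~~ e s y by move: sny; rewrite inE -(sy y s) (_ : e v s = true) //; rewrite inE in sS.
have es1 : e s w1 by move: sw1; rewrite inE (sy s w1) => /andP[].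
have es2 : e s w2 by move: sw2; rewrite inE (sy s w2) => /andP[].
have tS : t \in S by apply: (subsetP (trS x)).
have ts : ~~ e t s by apply: S_indep.
move: tx ty; rewrite !inE => /andP[_ xt] /andP[_ yt].
apply: (@mkC6 s x y w1 t w2) => //.
- by rewrite sy disjE // disjoint_sym.
- by rewrite disjE.
- by rewrite sy.
- by rewrite disjE // disjoint_sym.
- by rewrite sy.
- by rewrite disjE.
Qed.

Section Min.
Variable x0 : T.
Hypothesis x0M : x0 \in M.
Hypothesis x0min : forall x, x \in M -> #|tr x0| <= #|tr x|.
Definition T0 := tr x0.
Definition Bv x := (x \in M) && ~~ [disjoint tr x & T0].

Lemma T0ne : exists t, t \in T0.
Proof. exact: tr_ne. Qed.

Lemma K1 x : Bv x -> T0 \subset tr x.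
Proof.
case/andP=> xM D; apply/negPn/negP => nsub.
have [sub | nsub'] := boolP (tr x \subset T0).
  have := x0min xM; rewrite leqNgt => /negP; apply.
  apply: proper_card; apply/properP; split=> //.
  by move/subsetPn: nsub => [a ? ?]; exists a.
have D' : ~~ [disjoint tr x0 & tr x] by rewrite disjoint_sym.
have cov := Lcross x0M xM D' nsub nsub'.
move/subsetPn: nsub => [a aT0 anx].
have aS : a \in S by apply: (subsetP (trS x0)).
have [y yM /andP[ay dyx]] := Lmax xM aS anx.
have sub : tr y \subset T0.
  apply/subsetP=> s sy'; have sS : s \in S by apply: (subsetP (trS y)).
  case/orP: (cov s sS) => // sx.
  by move/pred0P: dyx => /(_ s) /=; rewrite sy' sx.
have := x0min yM; rewrite leqNgt => /negP; apply.
apply: proper_card; apply/properP; split=> //.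
have [t tx tT0] := dPn D; exists t => //.
apply/negP=> ty; exact: (dP dyx ty tx).
Qed.

Lemma K2 x y : Bv x -> Bv y -> (tr x \subset tr y) \/ (tr y \subset tr x).
Proof.
move=> Bx By; have := K1 Bx; have := K1 By; move: Bx By => /andP[xM _] /andP[yM _] sy0 sx0.
case: (boolP (tr x \subset tr y)) => [|nxy]; first by left.
case: (boolP (tr y \subset tr x)) => [|nyx]; first by right.
exfalso.
have [t tT0] := T0ne.
have Dxy : ~~ [disjoint tr x & tr y].
  by apply/pred0Pn; exists t; rewrite /= (subsetP sx0) ?(subsetP sy0).
have cov := Lcross xM yM Dxy nxy nyx.
move/subsetPn: nxy => [a ax ay]; move/subsetPn: nyx => [b bx by'].
have aS : a \in S by apply: (subsetP (trS x)).
have bS : b \in S by apply: (subsetP (trS y)).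
have [w1 w1M /andP[_ d1]] := Lmax yM aS ay.
have [w2 w2M /andP[_ d2]] := Lmax xM bS by'.
apply: (@Ltri w1 w2 x0) => //.
- apply/pred0P=> s /=; apply/negP=> /andP[s1 s2].
  have sS : s \in S by apply: (subsetP (trS w1)).
  case/orP: (cov s sS) => sxy.
    by move/pred0P: d2 => /(_ s) /=; rewrite s2 sxy.
  by move/pred0P: d1 => /(_ s) /=; rewrite s1 sxy.
- apply/pred0P=> s /=; apply/negP=> /andP[s1 s2].
  by move/pred0P: d2 => /(_ s) /=; rewrite s1 (subsetP sx0).
- apply/pred0P=> s /=; apply/negP=> /andP[s1 s2].
  by move/pred0P: d1 => /(_ s) /=; rewrite s1 (subsetP sy0).
Qed.

Lemma K3 x y : x \in M -> y \in M -> [disjoint tr x & T0] -> [disjoint tr y & T0] ->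
  ~~ [disjoint tr x & tr y].
Proof.
move=> xM yM dx dy; apply/negP=> dxy; apply: (@Ltri x y x0) => //.
Qed.

Definition C := [set tr x | x in [set x | Bv x && (tr x != S)]].

Lemma memC X : X \in C -> exists x, [/\ Bv x, tr x != S & X = tr x].
Proof. by case/imsetP=> x; rewrite inE => /andP[? ?] ->; exists x. Qed.

Lemma inC x : Bv x -> tr x != S -> tr x \in C.
Proof. by move=> ? ?; apply: imset_f; rewrite inE; apply/andP. Qed.

Lemma Cchain X Y : X \in C -> Y \in C -> (X \subset Y) \/ (Y \subset X).
Proof. by move=> /memC[x [Bx _ ->]] /memC[y [By _ ->]]; apply: K2. Qed.

Lemma CT0 X : X \in C -> T0 \subset X.
Proof. by move=> /memC[x [Bx _ ->]]; apply: K1. Qed.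

Lemma CS X : X \in C -> (X \subset S) && (X != S).
Proof. by move=> /memC[x [Bx nS ->]]; rewrite trS. Qed.

Definition r (s : T) := #|[set X in C | s \notin X]|.
Definition h (X : {set T}) := #|[set Y in C | Y \proper X]|.
Definition jA (y : T) := #|[set X in C | [disjoint X & tr y]]|.

Lemma R1 X s : X \in C -> s \in S -> (s \in X) = (r s <= h X).
Proof.
move=> XC sS; apply/idP/idP.
  move=> sX; apply: subset_leq_card; apply/subsetP=> Y; rewrite !inE => /andP[YC sY].
  rewrite YC /=; case: (Cchain XC YC) => sub.
    by rewrite (subsetP sub) in sY.
  rewrite properEneq sub andbT; apply/negP=> /eqP eYX; subst Y; by rewrite sX in sY.
apply: contraLR; rewrite -ltnNge => sX; apply: proper_card; apply/properP; split.
  apply/subsetP=> Y; rewrite !inE => /andP[YC /properP[sub _]]; rewrite YC /=.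
  by apply/negP=> sY; rewrite (subsetP sub) in sX.
by exists X; rewrite !inE ?XC // properxx.
Qed.

Lemma R2 y s : y \in M -> [disjoint tr y & T0] -> s \in S -> (s \in tr y) = (jA y <= r s).
Proof.
move=> yM dy sS; apply/idP/idP.
  move=> sy'; apply: subset_leq_card; apply/subsetP=> X; rewrite !inE => /andP[XC dX].
  rewrite XC /=; apply/negP=> sX; by move/pred0P: dX => /(_ s) /=; rewrite sX sy'.
apply: contraLR; rewrite -ltnNge => sny.
have [w wM /andP[sw dwy]] := Lmax yM sS sny.
have Bw : Bv w.
  rewrite /Bv wM /=; apply/negP=> dw.
  by move: (K3 wM yM dw dy); rewrite dwy.
have wS : tr w != S.
  have [t ty] := tr_ne yM; apply/negP=> /eqP ew.
  have tS : t \in S by apply: (subsetP (trS y)).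
  by move/pred0P: dwy => /(_ t) /=; rewrite ew tS ty.
have WC := inC Bw wS.
apply: proper_card; apply/properP; split.
  apply/subsetP=> X; rewrite !inE => /andP[XC sX]; rewrite XC /=.
  case: (Cchain XC WC) => sub.
    apply/pred0P=> t /=; apply/negP=> /andP[tX ty].
    by move/pred0P: dwy => /(_ t) /=; rewrite ty (subsetP sub).
  by rewrite (subsetP sub) in sX.
by exists (tr w); rewrite in_set WC /= ?sw.
Qed.

Lemma R3 X y : X \in C -> y \in M -> [disjoint tr y & T0] ->
  [disjoint X & tr y] = (h X < jA y).
Proof.
move=> XC yM dy; apply/idP/idP.
  move=> dX; apply: proper_card; apply/properP; split.
    apply/subsetP=> Y; rewrite !inE => /andP[YC /properP[sub _]]; rewrite YC /=.
    apply/pred0P=> t /=; apply/negP=> /andP[tY ty].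
    by move/pred0P: dX => /(_ t) /=; rewrite ty (subsetP sub).
  by exists X; rewrite !inE ?XC // properxx.
apply: contraLR => /pred0Pn [s /andP[sX sy']].
have sS : s \in S by apply: (subsetP (trS y)).
rewrite -leqNgt; apply: (@leq_trans (r s)).
  by rewrite -R2.
by rewrite -R1.
Qed.

Lemma r_le s : r s <= #|C|.
Proof. by apply: subset_leq_card; apply/subsetP=> X; rewrite inE => /andP[]. Qed.

Lemma h_lt X : X \in C -> h X < #|C|.
Proof.
move=> XC; apply: proper_card; apply/properP; split.
  by apply/subsetP=> Y; rewrite inE => /andP[].
by exists X; rewrite // inE properxx andbF.
Qed.

Lemma jA_le y : jA y <= #|C|.
Proof. by apply: subset_leq_card; apply/subsetP=> X; rewrite inE => /andP[]. Qed.

Lemma T0C y : y \in M -> [disjoint tr y & T0] -> T0 \in C.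
Proof.
move=> yM dy; apply: inC.
  rewrite /Bv x0M /=; have [t tT] := T0ne; apply/pred0Pn; exists t; by rewrite /= tT.
have [t ty] := tr_ne yM; apply/negP=> /eqP e0.
have tS : t \in S by apply: (subsetP (trS y)).
apply: (dP dy ty); by rewrite /T0 e0.
Qed.

Lemma jA_gt y : y \in M -> [disjoint tr y & T0] -> 0 < jA y.
Proof.
move=> yM dy; apply/card_gt0P; exists T0; rewrite inE (T0C yM dy) /=.
by rewrite disjoint_sym.
Qed.

Lemma h_inj : {in C &, injective h}.
Proof.
move=> X Y XC YC hXY; apply/eqP; apply/negPn/negP => nXY.
have lt : forall A B, A \in C -> B \in C -> A \proper B -> h A < h B.
  move=> A B AC BC AB; apply: proper_card; apply/properP; split.
    apply/subsetP=> Z; rewrite !inE => /andP[ZC ZA]; rewrite ZC /=.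
    by apply: (proper_trans ZA).
  by exists A; rewrite !inE ?AC ?BC // properxx.
case: (Cchain XC YC) => sub.
  have: h X < h Y by apply: lt => //; rewrite properEneq nXY.
  by rewrite hXY ltnn.
have: h Y < h X by apply: lt => //; rewrite properEneq eq_sym nXY.
by rewrite hXY ltnn.
Qed.


Lemma NEXT X : X \in C -> exists2 s, s \in S & (s \notin X) && (r s == (h X).+1).
Proof.
move=> XC; have /andP[XS XnS] := CS XC.
have [s0 s0S s0X] : exists2 s0, s0 \in S & s0 \notin X.
  have: ~~ (S \subset X) by apply: contra XnS => SX; rewrite eqEsubset XS SX.
  by case/subsetPn=> s0 ? ?; exists s0.
pose D := [set s | (s \in S) && (s \notin X)].
have s0D : s0 \in D by rewrite inE s0S s0X.
case: (arg_minnP r s0D) => s sD smin.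
have: s \in D by []. rewrite /D inE => /andP[sS sX].
exists s => //; rewrite sX /=.
have lo : h X < r s by rewrite ltnNge -R1.
rewrite eqn_leq lo andbT; apply/negP => /negP; rewrite -ltnNge => hi.
have [Y YC /andP[sY nYX]] : exists2 Y, Y \in C & (s \notin Y) && ~~ (Y \subset X).
  apply/exists_inP; apply: contraT => /exists_inPn H.
  have: r s <= (h X).+1.
    have -> : (h X).+1 = #|X |: [set Y in C | Y \proper X]|.
      by rewrite cardsU1 inE properxx andbF.
    apply: subset_leq_card; apply/subsetP=> Y; rewrite !inE => /andP[YC sY].
    have := H Y YC; rewrite negb_and sY /= negbK => YX.
    by rewrite properEneq YX YC andbT orbC; case: eqP.
  by rewrite leqNgt hi.
have XY : X \subset Y by case: (Cchain XC YC) => // YX; rewrite YX in nYX.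
have /subsetPn [s2 s2Y s2X] : ~~ (Y \subset X) := nYX.
have s2S : s2 \in S by move: (CS YC) => /andP[/subsetP ->].
have s2D : s2 \in D by rewrite /D inE s2S s2X.
have := smin s2 s2D; apply/negP; rewrite -ltnNge.
apply: proper_card; apply/properP; split.
  apply/subsetP=> Z; rewrite !inE => /andP[ZC s2Z]; rewrite ZC /=.
  case: (Cchain ZC YC) => sub; last by rewrite (subsetP sub) in s2Z.
  by apply: contra sY; apply: (subsetP sub).
by exists Y; rewrite in_set YC /= ?sY ?s2Y.
Qed.

Definition kk := #|C|.+1.
Definition lab x := if e v x then kk + r x else if x \in M then
  (if tr x == S then 0 else if [disjoint tr x & T0] then jA x else 2*kk + h (tr x)) else 0.

Lemma cat3 x : [\/ x = v, x \in S | x \in M].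
Proof.
rewrite !inE; case: (eqVneq x v) => [->|xv]; first by constructor 1.
by case: (boolP (e v x)) => vx; [constructor 2 | constructor 3].
Qed.

Lemma labM x : x \in M ->
  [\/ tr x = S /\ lab x = 0,
      [/\ [disjoint tr x & T0], tr x != S & lab x = jA x]
    | tr x \in C /\ lab x = 2*kk + h (tr x)].
Proof.
move=> xM; have vx : e v x = false by move: xM; rewrite inE => /andP[_ /negbTE].
rewrite /lab vx xM; case: eqP => [->|nS]; first by constructor 1.
case: (boolP [disjoint tr x & T0]) => d; first by constructor 2; split=> //; apply/eqP.
constructor 3; split=> //; apply: inC; [by rewrite /Bv xM | by apply/eqP].
Qed.

Lemma labS s : s \in S -> lab s = kk + r s.
Proof. by rewrite inE /lab => ->. Qed.

Lemma labv : lab v = 0.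
Proof. by rewrite /lab eirr inE eqxx. Qed.

Lemma ndS x y : y \in M -> tr x = S -> ~~ [disjoint tr x & tr y].
Proof.
move=> yM ->; have [t ty] := tr_ne yM; apply/pred0Pn; exists t.
by rewrite /= ty (subsetP (trS y)).
Qed.

Lemma adjM x y : x \in M -> y \in M -> e x y = adjN kk (lab x) (lab y).
Proof.
move=> xM yM; rewrite disjE // /adjN.
have rC := r_le; have hC := h_lt; have jC := jA_le.
case: (labM xM) => [[tx ->]|[dx nx ->]|[Cx ->]];
case: (labM yM) => [[ty ->]|[dy ny ->]|[Cy ->]].
- by rewrite (negbTE (ndS yM tx)).
- by rewrite (negbTE (ndS yM tx)); have := jC y; rewrite /kk; lia.
- by rewrite (negbTE (ndS yM tx)); have := hC _ Cy; rewrite /kk; lia.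
- by rewrite disjoint_sym (negbTE (ndS xM ty)); have := jC x; rewrite /kk; lia.
- by rewrite (negbTE (K3 xM yM dx dy)); have := jC x; have := jC y; rewrite /kk; lia.
- rewrite disjoint_sym (R3 Cy xM dx); have := jC x; have := hC _ Cy; have := jA_gt xM dx; rewrite /kk; lia.
- by rewrite disjoint_sym (negbTE (ndS xM ty)); have := hC _ Cx; rewrite /kk; lia.
- rewrite (R3 Cx yM dy); have := jC y; have := hC _ Cx; have := jA_gt yM dy; rewrite /kk; lia.
- have [t tT] := T0ne.
  have -> : [disjoint tr x & tr y] = false.
    apply/negbTE/pred0Pn; exists t; by rewrite /= (subsetP (CT0 Cx)) ?(subsetP (CT0 Cy)).
  have := hC _ Cx; have := hC _ Cy; rewrite /kk; lia.
Qed.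

Lemma adjSM s y : s \in S -> y \in M -> e s y = adjN kk (lab s) (lab y).
Proof.
move=> sS yM; rewrite (labS sS) /adjN.
have -> : e s y = (s \in tr y) by move: (sS); rewrite !inE => ->; rewrite sy.
have rC := r_le s; have hC := h_lt; have jC := jA_le.
case: (labM yM) => [[ty ->]|[dy ny ->]|[Cy ->]].
- by rewrite ty sS /kk; lia.
- rewrite (R2 yM dy sS); have := jC y; rewrite /kk; lia.
- rewrite (R1 Cy sS); have := hC _ Cy; rewrite /kk; lia.
Qed.

Lemma adjNC a b : adjN kk a b = adjN kk b a.
Proof. by rewrite /adjN orbC. Qed.

Lemma adjall x y : e x y = adjN kk (lab x) (lab y).
Proof.
have rC := r_le.
have vM : forall y, y \in M -> e v y = adjN kk 0 (lab y).
  move=> z zM; have vz : e v z = false by move: zM; rewrite inE => /andP[_ /negbTE].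
  rewrite vz /adjN; have hC := h_lt; have jC := jA_le z.
  case: (labM zM) => [[_ ->]|[_ _ ->]|[Cz ->]]; rewrite /kk.
  - lia.
  - move: jC; rewrite /kk; lia.
  - have := hC _ Cz; rewrite /kk; lia.
case: (cat3 x) => [->|xS|xM]; case: (cat3 y) => [->|yS|yM].
- by rewrite eirr labv.
- by rewrite labv labS //; move: yS; rewrite inE => ->; rewrite /adjN; have := rC y; rewrite /kk; lia.
- by rewrite labv; apply: vM.
- by rewrite labv labS // sy; move: xS; rewrite inE => ->; rewrite /adjN; have := rC x; rewrite /kk; lia.
- rewrite !labS // (negbTE (S_indep xS yS)) /adjN; have := rC x; have := rC y; rewrite /kk; lia.
- exact: adjSM.
- by rewrite labv sy adjNC; apply: vM.
- by rewrite sy adjNC; apply: adjSM.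
- exact: adjM.
Qed.

Lemma lab_lt x : lab x < 3 * kk - 1.
Proof.
have rC := r_le; have hC := h_lt; have jC := jA_le.
case: (cat3 x) => [->|xS|xM]; first by rewrite labv /kk; lia.
  by rewrite labS //; have := rC x; rewrite /kk; lia.
case: (labM xM) => [[_ ->]|[_ _ ->]|[Cx ->]]; rewrite /kk.
- lia.
- have := jC x; rewrite /kk; lia.
- have := hC _ Cx; rewrite /kk; lia.
Qed.

Lemma labA x : x \in M -> [disjoint tr x & T0] -> lab x = jA x.
Proof.
move=> xM d; have vx : e v x = false by move: xM; rewrite inE => /andP[_ /negbTE].
rewrite /lab vx xM d; case: eqP => // eS.
by have [t tT] := T0ne; exfalso; apply: (dP d _ tT); rewrite eS (subsetP (trS x0)).
Qed.

Lemma labB x : Bv x -> tr x != S -> lab x = 2*kk + h (tr x).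
Proof.
move=> /andP[xM d] nS; have vx : e v x = false by move: xM; rewrite inE => /andP[_ /negbTE].
by rewrite /lab vx xM (negbTE nS) (negbTE d).
Qed.

Lemma rank0 : exists2 s, s \in S & r s = 0.
Proof.
have [t tT] := T0ne; exists t; first by apply: (subsetP (trS x0)).
apply/eqP; rewrite cards_eq0; apply/eqP/setP=> X; rewrite !inE.
by case XC: (X \in C) => //=; rewrite (subsetP (CT0 XC)).
Qed.

Lemma lab_surj u : u < 3 * kk - 1 -> exists x, lab x = u.
Proof.
move=> ub.
have gap := fill_gap h_inj h_lt.
have [->|u0] := eqVneq u 0; first by exists v; rewrite labv.
have [uc|uc] := leqP u #|C|.
  have [X XC hX] : exists2 X, X \in C & h X = u.-1 by apply: gap; lia.
  have [s sS /andP[sX /eqP rs]] := NEXT XC.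
  have [x [Bx nS eX]] := memC XC; subst X.
  have xM : x \in M by case/andP: Bx.
  have [w wM /andP[sw dw]] := Lmax xM sS sX.
  have dw0 : [disjoint tr w & T0].
    by apply: dI => t tw tT; apply: (dP dw tw); apply: (subsetP (K1 Bx)).
  exists w; rewrite labA //.
  have le1 : jA w <= r s by rewrite -(R2 wM dw0 sS).
  have lt1 : h (tr x) < jA w by rewrite -(R3 XC wM dw0) disjoint_sym.
  move: le1 lt1; rewrite rs hX; lia.
have [uc2|uc2] := leqP u (2 * #|C|).+1.
  have [->|m0] := eqVneq u kk.
    by have [s sS rs] := rank0; exists s; rewrite labS // rs addn0.
  have [X XC hX] : exists2 X, X \in C & h X = (u - kk).-1 by apply: gap; rewrite /kk in m0 *; lia.
  have [s sS /andP[sX /eqP rs]] := NEXT XC.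
  by exists s; rewrite labS // rs hX; rewrite /kk in m0 *; lia.
have [X XC hX] : exists2 X, X \in C & h X = u - 2 * kk by apply: gap; rewrite /kk in ub uc2 *; lia.
have [x [Bx nS eX]] := memC XC; subst X.
by exists x; rewrite labB // hX; rewrite /kk in uc2 *; lia.
Qed.
End Min.
End Fwd.

Lemma adjNC' k a b : adjN k a b = adjN k b a.
Proof. by rewrite /adjN orbC. Qed.
Lemma k1 k p q r w : 1 <= k -> p <= q -> q <= r -> r < p + k -> r <= 3*k-2 -> w <= 3*k-2 ->
 adjN k w p -> adjN k w r -> ~~ adjN k w q -> False.
Proof. rewrite /adjN. lia. Qed.
Lemma k2 k p q r w : 1 <= k -> q >= p + 2*k -> q <= r -> r < q + k -> r <= 3*k-2 -> w <= 3*k-2 ->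
 adjN k w p -> adjN k w q -> ~~ adjN k w r -> False.
Proof. rewrite /adjN. lia. Qed.
Lemma k3 k p q r w : 1 <= k -> p <= q -> q < p + k -> r >= q + 2*k -> r <= 3*k-2 -> w <= 3*k-2 ->
 adjN k w q -> adjN k w r -> ~~ adjN k w p -> False.
Proof. rewrite /adjN. lia. Qed.
Lemma sortedF k p q r u v w : 1 <= k -> p <= q -> q <= r -> r <= 3*k-2 -> u <= 3*k-2 -> v <= 3*k-2 -> w <= 3*k-2 ->
 ~~ adjN k p q -> ~~ adjN k q r -> ~~ adjN k p r ->
 adjN k u p -> adjN k u q -> ~~ adjN k u r ->
 adjN k v q -> adjN k v r -> ~~ adjN k v p ->
 adjN k w p -> adjN k w r -> ~~ adjN k w q -> False.
Proof.
move=> k1' pq qr rb ub vb wb npq nqr npr up uq ur vq vr vp wp wr wq.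
case: (ltnP r (p + k)) => c1; first exact: (k1 k1' pq qr c1 rb wb wp wr wq).
case: (leqP (p + 2*k) q) => c2.
  have c2' : r < q + k by move: nqr c2 rb qr; clear; rewrite /adjN; lia.
  exact: (k2 k1' c2 qr c2' rb ub up uq ur).
case: (leqP (q + 2*k) r) => c3.
  have c3' : q < p + k by move: npq c3 rb pq; clear; rewrite /adjN; lia.
  exact: (k3 k1' pq c3' c3 rb vb vq vr vp).
move: npq nqr npr c1 c2 c3 pq qr; clear; rewrite /adjN; lia.
Qed.
Ltac cl := solve [ done | exact: ltnW | match goal with H : _ = _ |- _ => rewrite H; done end | match goal with H : _ = _ |- _ => rewrite -H; done end ].
Lemma tripleF k a b c u v w : 1 <= k -> a <= 3*k-2 -> b <= 3*k-2 -> c <= 3*k-2 -> u <= 3*k-2 -> v <= 3*k-2 -> w <= 3*k-2 ->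
 ~~ adjN k a b -> ~~ adjN k b c -> ~~ adjN k a c ->
 adjN k u a -> adjN k u b -> ~~ adjN k u c ->
 adjN k v b -> adjN k v c -> ~~ adjN k v a ->
 adjN k w a -> adjN k w c -> ~~ adjN k w b -> False.
Proof.
move=> k1' *.
have HAB := adjNC' k a b; have HBC := adjNC' k b c; have HAC := adjNC' k a c.
case: (leqP a b) => ab; case: (leqP b c) => bc; case: (leqP a c) => ac.
all: try (exfalso; move: ab bc ac; clear; lia).
all: first
  [ by apply: (@sortedF k a b c u v w); cl | by apply: (@sortedF k a c b w v u); cl
  | by apply: (@sortedF k c a b w u v); cl | by apply: (@sortedF k b a c u w v); cl
  | by apply: (@sortedF k b c a v w u); cl | by apply: (@sortedF k c b a v u w); cl ].
Qed.


Lemma rev_dir (T : finType) (e : rel T) k : 1 <= k -> is_blowup_of e (@andrasfai_adj k) -> ~ has_induced_C6 e.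
Proof.
move=> k1 [f [_ fe]] [w [_ H]].
have A : forall i j : 'I_6, adjN k (f (w i)) (f (w j)) = c6_adj i j.
  by move=> i j; rewrite -andrE // -fe H.
have bd : forall i, nat_of_ord (f (w i)) <= 3*k-2.
  by move=> i; have := ltn_ord (f (w i)); lia.
apply: (@tripleF k (f (w (@Ordinal 6 0 isT))) (f (w (@Ordinal 6 2 isT))) (f (w (@Ordinal 6 4 isT)))
   (f (w (@Ordinal 6 1 isT))) (f (w (@Ordinal 6 3 isT))) (f (w (@Ordinal 6 5 isT)))) => //; by rewrite A.
Qed.

Unset Implicit Arguments.

Theorem proposition3p5 (T : finType) (e : rel T) :
  simple_graph e -> maximal_triangle_free e -> 2 <= #|T| ->
  (~ has_induced_C6 e <->
   exists k : nat, 1 <= k /\ is_blowup_of e (@andrasfai_adj k)).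
Proof.
move=> [esy eirr] [tf mx] n2; split; last by move=> [k [k1 B]]; exact: (rev_dir k1 B).
move=> nc6.
have [v _] : exists v : T, v \in T by apply/card_gt0P; apply: leq_trans _ n2.
case: (set_0Vmem (M e v)) => [M0 | [x1 x1M]].
  have [y yv] : exists y : T, y != v.
    have : 0 < #|[set~ v]| by rewrite cardsC1; lia.
    by case/card_gt0P=> y; rewrite in_setC1 => ?; exists y.
  have SS : forall x, x != v -> e v x.
    move=> x xv; apply/negPn/negP=> vx.
    have : x \in M e v by rewrite inE xv vx.
    by rewrite M0 inE.
  pose l0 x := if e v x then 1 else 0.
  have l0lt : forall x, l0 x < 3*1-1 by move=> x; rewrite /l0; case: (e v x).
  exists 1; split=> //.
  exists (fun x => Ordinal (l0lt x)); split.
    move=> [[|[|u]] Hu] //.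
      by exists v; apply: val_inj; rewrite /= /l0 eirr.
    by exists y; apply: val_inj; rewrite /= /l0 SS.
  move=> a b; rewrite andrE //=.
  case: (eqVneq a v) => [->|av]; case: (eqVneq b v) => [->|bv].
  - by rewrite eirr /l0 eirr.
  - by rewrite /l0 eirr SS.
  - by rewrite /l0 eirr SS // esy SS.
  - rewrite /l0 !SS //.
    have -> : e a b = false.
      by apply/negbTE/negP=> ab; apply: (@notri _ e tf v a b) => //; apply: SS.
    by [].
pose x0 := [arg min_(x < x1 in M e v) #|tr e v x|].
have [x0M x0min] : x0 \in M e v /\ (forall x, x \in M e v -> #|tr e v x0| <= #|tr e v x|).
  by rewrite /x0; case: arg_minnP.
exists (kk e v x0); split; first by [].
exists (fun x => Ordinal (lab_lt eirr x0M x)); split.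
  move=> u; have [x hx] := lab_surj esy eirr tf mx nc6 x0M x0min (ltn_ord u).
  by exists x; apply: val_inj.
by move=> x y; rewrite andrE // (adjall esy eirr tf mx nc6 x0M x0min).
Qed.
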